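(* Let $(w_{n,k})_{n,k\ge0}$ be an array of complex numbers such that, for some constants $L,M$: $w_{n,k}=0$ for $k>n$; $\lim_{n\to\infty}w_{n,k}=1$ for every $k$; $|w_{n,k}|\le M$ for all $n,k$; and $|w_{n,k}-w_{n,k+1}|\le L/n$ for all $n\ge1,k\ge0$. Let $f(z)=\sum_{k\ge0}a_kz^k$ be holomorphic on $\mathbb D$ and $p_n(z):=\sum_{k=0}^n w_{n,k}a_kz^k$. Let $\zeta\in\overline{\mathbb D}$ with $\mathcal D_\zeta(f)<\infty$. Then $\lim_{n\to\infty}\mathcal D_\zeta(f-p_n)=0$ and $\sup_{n\ge1}\mathcal D_\zeta(f-p_n)\le C^2\mathcal D_\zeta(f)$, where $C$ is a constant depending only on the array $(w_{n,k})$ (not on $f$ or $\zeta$).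
   Context: $\mathbb D$ is the open unit disk, $\mathrm{Hol}(\mathbb D)$ the holomorphic functions on $\mathbb D$, and $H^2$ the Hardy space with $\|\sum b_kz^k\|_{H^2}^2=\sum|b_k|^2$. For $\zeta\in\overline{\mathbb D}$, $\mathcal D_\zeta$ is the set of $f\in\mathrm{Hol}(\mathbb D)$ of the form $f(z)=a+(z-\zeta)g(z)$ with $g\in H^2$, $a\in\mathbb C$; for such $f$ set $\mathcal D_\zeta(f):=\|g\|_{H^2}^2$, and set $\mathcal D_\zeta(f):=\infty$ if $f\notin\mathcal D_\zeta$. *)

(* Defs.v *)
From mathcomp Require Import all_boot all_algebra.
From mathcomp Require Import all_classical all_reals all_analysis.
From mathcomp Require Export complex.
Import GRing.Theory Num.Theory Num.Def.
Import numFieldTopology.Exports numFieldNormedType.Exports.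
Set Implicit Arguments. Unset Strict Implicit. Unset Printing Implicit Defensive.
Local Open Scope ring_scope.
Local Open Scope classical_set_scope.

(* The complex numbers over R, declared as a numClosedFieldType so that the
   analysis library equips it with its normed/topological structure. *)
Definition Cx (R : realType) : numClosedFieldType := R[i].

Definition modc (R : realType) (z : Cx R) : R :=
  Num.sqrt (complex.Re (z : R[i]) ^+ 2 + complex.Im (z : R[i]) ^+ 2).

Definition psum (R : realType) (b : nat -> Cx R) (z : Cx R) (n : nat) : Cx R :=
  \sum_(k < n) b k * z ^+ k.

Definition pser (R : realType) (a : nat -> Cx R) (z : Cx R) : Cx R :=
  limn (psum a z).

Definition H2norm2 (R : realType) (b : nat -> Cx R) : \bar R :=
  (\sum_(0 <= k <oo) ((modc (b k)) ^+ 2)%:E)%E.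

Definition Drep (R : realType) (zeta : Cx R) (h : Cx R -> Cx R) (b : nat -> Cx R) : Prop :=
  (H2norm2 b < +oo)%E /\
  exists c : Cx R, forall z : Cx R, modc z < 1 ->
    exists s : Cx R, psum b z n @[n --> \oo] --> s /\ h z = c + (z - zeta) * s.

(* D_zeta(h) := ||g||_{H^2}^2 if h = c + (z - zeta) g with g in H^2, and +oo
   otherwise (infimum over representations; the representation is unique). *)
Definition Dzeta (R : realType) (zeta : Cx R) (h : Cx R -> Cx R) : \bar R :=
  ereal_inf [set H2norm2 b | b in [set b | Drep zeta h b]].

Definition pn (R : realType) (w : nat -> nat -> Cx R) (a : nat -> Cx R) (n : nat)
  (z : Cx R) : Cx R :=
  \sum_(k < n.+1) w n k * a k * z ^+ k.

(* Main.v *)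
Require Import Defs.
From mathcomp Require Import all_boot all_algebra.
From mathcomp Require Import all_classical all_reals all_analysis.
From mathcomp Require Import complex ring lra.
Import order.Order.TTheory GRing.Theory Num.Theory Num.Def.
Import numFieldTopology.Exports numFieldNormedType.Exports.
Local Open Scope ring_scope.
Local Open Scope classical_set_scope.

Section Modc.
Variable R : realType.
Local Notation C := (Cx R).

Lemma modcE (z : C) : ((modc z)%:C%C : R[i]) = `|z|.
Proof. by rewrite normc_def. Qed.

Lemma modc_ge0 (z : C) : 0 <= modc z.
Proof. exact: sqrtr_ge0. Qed.

Lemma modc_le (z : C) (r : R) : (modc z <= r) = (`|z| <= (r%:C%C : R[i])).
Proof. by rewrite -modcE lecR. Qed.

Lemma modcM (x y : C) : modc (x * y) = modc x * modc y.
Proof. apply: complexI; by rewrite rmorphM /= !modcE normrM. Qed.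

Lemma modcD (x y : C) : modc (x + y) <= modc x + modc y.
Proof. by rewrite -lecR rmorphD /= !modcE ler_normD. Qed.

Lemma modcN (x : C) : modc (- x) = modc x.
Proof. apply: complexI; by rewrite !modcE normrN. Qed.

Lemma modcB (x y : C) : modc (x - y) <= modc x + modc y.
Proof. by rewrite -(modcN y) modcD. Qed.

Lemma modcX (x : C) n : modc (x ^+ n) = modc x ^+ n.
Proof. apply: complexI; by rewrite rmorphXn /= !modcE normrX. Qed.

Lemma modc0 : modc (0 : C) = 0.
Proof. apply: complexI; by rewrite modcE normr0. Qed.

Lemma modc1 : modc (1 : C) = 1.
Proof. apply: complexI; by rewrite modcE normr1. Qed.

Lemma modc_eq0 (x : C) : (modc x = 0) -> x = 0.
Proof. move=> h; apply/eqP; rewrite -normr_eq0 -modcE h //. Qed.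

Lemma modc_sum I (r : seq I) (P : pred I) (F : I -> C) :
  modc (\sum_(i <- r | P i) F i) <= \sum_(i <- r | P i) modc (F i).
Proof.
elim/big_rec2: _ => [|i y x _ h]; first by rewrite modc0.
apply: le_trans (modcD _ _) _; by rewrite lerD2l.
Qed.


Lemma modc_real (t : R) : 0 <= t -> modc ((t%:C)%C : C) = t.
Proof. by move=> t0; rewrite /modc /= expr0n /= addr0 sqrtr_sqr ger0_norm. Qed.

Lemma psumS (c : nat -> C) z N : psum c z N.+1 = psum c z N + c N * z ^+ N.
Proof. by rewrite /psum big_ord_recr. Qed.

Lemma coef_bound (c : nat -> C) (z : C) : cvgn (psum c z) ->
  exists B, forall k, modc (c k) * modc z ^+ k <= B.
Proof.
move=> cv; have := cvg_seq_bounded cv; case/ex_bound => [|M hM].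
  by apply: (@globally_properfilter _ _ 0%N).
have hM' N : modc (psum c z N) <= modc M.
  have h : `|psum c z N| <= M := hM N I.
  have M0 : 0 <= M by apply: le_trans h; exact: normr_ge0.
  by rewrite modc_le modcE (ger0_norm M0).

exists (modc M + modc M) => k; rewrite -modcX -modcM.
have -> : c k * z ^+ k = psum c z k.+1 - psum c z k by rewrite psumS addrC addKr.
by apply: le_trans (modcB _ _) _; rewrite lerD.
Qed.


Lemma geom_bound (x : R) N : 0 <= x -> x <= 2^-1 ->
  \sum_(j < N) x ^+ j <= 2 - 2 * x ^+ N.
Proof.
move=> x0 x2; elim: N => [|N IH]; first by rewrite big_ord0 expr0 mulr1 subrr.
rewrite big_ord_recr /= exprSr.
have y0 : 0 <= x ^+ N := exprn_ge0 N x0.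
set y := x ^+ N in IH y0 *. set S := \sum_(i < N) _ in IH *. nra.
Qed.

Lemma pser_uniq (c : nat -> C) :
  (forall z : C, modc z < 1 -> psum c z n @[n --> \oo] --> 0) -> forall k, c k = 0.
Proof.
move=> H.
have h20 : (0 : R) <= 2^-1 by rewrite invr_ge0.
have h2 : modc ((2^-1)%:C%C : C) = 2^-1 by rewrite modc_real.
have [B HB] : exists B, forall k, modc (c k) * (2^-1) ^+ k <= B.
  have h2lt : modc ((2^-1)%:C%C : C) < 1 by rewrite h2; lra.
  have [B HB] := @coef_bound c _ (cvgP _ (H _ h2lt)).
  by exists B => k; rewrite -h2.
have B0 : 0 <= B by apply: le_trans (HB 0%N); rewrite expr0 mulr1 modc_ge0.
elim/ltn_ind => m IH.
have key t : 0 < t -> t <= 4^-1 -> modc (c m) <= B * 2 ^+ m.+2 * t.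
  move=> t0 t4.
  set z : C := (t%:C)%C.
  have mz : modc z = t by rewrite modc_real // ltW.
  have zlt : modc z < 1 by rewrite mz; lra.
  have t2 : 0 <= 2 * t by lra.
  have tailb N : modc (\sum_(j < N) c (m.+1 + j)%N * z ^+ (m.+1 + j)) <=
      2 * B * (2 * t) ^+ m.+1.
    apply: le_trans (modc_sum _ _ _ _) _.
    apply: (@le_trans _ _ (\sum_(j < N) B * (2 * t) ^+ (m.+1 + j))).
      apply: ler_sum => j _; rewrite modcM modcX mz.
      have := HB (m.+1 + j)%N; set k := (m.+1 + j)%N => hk.
      have -> : t ^+ k = (2^-1) ^+ k * (2 * t) ^+ k.
        by rewrite -exprMn mulrA mulVf ?mul1r // pnatr_eq0.
      rewrite mulrA; apply: ler_wpM2r => //; exact: exprn_ge0.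
    under eq_bigr => j _ do rewrite exprD mulrA.
    rewrite -mulr_sumr.
    have := @geom_bound (2 * t) N t2 ltac:(lra).
    have := exprn_ge0 N t2.
    have := exprn_ge0 m.+1 t2.
    set G := \sum_(i < N) _. set y := (2 * t) ^+ m.+1. set x := (2 * t) ^+ N.
    move=> y0 x0 hG. have By : 0 <= B * y by exact: mulr_ge0. nra.
  have decomp N : psum c z (m.+1 + N) =
      c m * z ^+ m + \sum_(j < N) c (m.+1 + j)%N * z ^+ (m.+1 + j).
    rewrite /psum big_split_ord /= big_ord_recr /= big1 ?add0r //.
    by move=> i _; rewrite IH ?mul0r.
  have step e : 0 < e -> modc (c m) * t ^+ m <= e + 2 * B * (2 * t) ^+ m.+1.
    move=> e0.
    have e0' : (0 : C) < (e%:C)%C by rewrite ltcR.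
    have [N0 _ hN0] := proj1 (cvgrPdist_le _ _) (H z zlt) _ e0'.
    have := hN0 (m.+1 + N0)%N (leq_addl _ _).
    rewrite /= sub0r normrN => hle. have {}hle : modc (psum c z (m.+1 + N0)) <= e by rewrite modc_le.
    rewrite -[t in t ^+ m]mz -modcX -modcM.
    have -> : c m * z ^+ m = psum c z (m.+1 + N0) -
        \sum_(j < N0) c (m.+1 + j)%N * z ^+ (m.+1 + j) by rewrite decomp addrK.
    by apply: le_trans (modcB _ _) _; apply: lerD.
  have : modc (c m) * t ^+ m <= 2 * B * (2 * t) ^+ m.+1.
    by apply/ler_addgt0Pr => e e0; rewrite addrC; exact: step.
  have -> : 2 * B * (2 * t) ^+ m.+1 = B * 2 ^+ m.+2 * t * t ^+ m.
    rewrite !exprS exprMn. set a := 2 ^+ m. set b := t ^+ m. ring.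
  by rewrite ler_pM2r // exprn_gt0.
set K := B * 2 ^+ m.+2.
have K0 : 0 <= K by rewrite mulr_ge0 // exprn_ge0.
have u0 := modc_ge0 (c m).
have : modc (c m) <= 0.
  apply/ler_addgt0Pr => e e0; rewrite add0r.
  have K1 : 0 < K + 1 by lra.
  set t := Num.min (4^-1 : R) (e / (K + 1)).
  have t0 : 0 < t by rewrite lt_min invr_gt0 divr_gt0 // ltr0n.
  have t4 : t <= 4^-1 by rewrite ge_min lexx.
  have te : t <= e / (K + 1) by rewrite ge_min lexx orbT.
  have te' : (K + 1) * t <= e.
    apply: le_trans (ler_wpM2l (ltW K1) te) _; by rewrite mulrC divfK ?gt_eqF.
  have := key t t0 t4; rewrite -/K => hk. nra.
move=> h; apply: modc_eq0; apply/eqP; by rewrite eq_le h u0.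
Qed.


Definition Dsh (zeta : C) (b : nat -> C) (k : nat) : C :=
  (if k is k'.+1 then b k' else 0) - zeta * b k.

Lemma psumD zeta b z N :
  psum (Dsh zeta b) z N.+1 = z * psum b z N - zeta * psum b z N.+1.
Proof.
elim: N => [|N IH].
  by rewrite /psum !big_ord_recr !big_ord0 /Dsh /= !expr0; ring.
rewrite psumS IH !psumS /Dsh exprS.
set P := psum b z N; set x := z ^+ N; ring.
Qed.


Lemma cs_sum (x : nat -> R) K :
  (\sum_(j < K) x j) ^+ 2 <= K%:R * \sum_(j < K) x j ^+ 2.
Proof.
elim: K => [|K IH]; first by rewrite !big_ord0 expr0n mul0r.
have Q0 : 0 <= \sum_(j < K) x j ^+ 2 by apply: sumr_ge0 => j _; exact: sqr_ge0.
rewrite !big_ord_recr /=.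
case: K IH Q0 => [|K] IH Q0.
  by rewrite !big_ord0 !add0r mulr1n mul1r.
set S := \sum_(j < K.+1) x j in IH *. set Q := \sum_(j < K.+1) x j ^+ 2 in IH Q0 *.
set y := x K.+1.
have k0 : (0 : R) < K.+1%:R by rewrite ltr0n.
set k := K.+1%:R in IH k0 *.
have -> : K.+2%:R = k + 1 by rewrite /k -natr1.
have h1 : 0 <= k * (k * Q - S ^+ 2) by apply: mulr_ge0; [exact: ltW | rewrite subr_ge0].
have h2 : 0 <= (S - k * y) ^+ 2 by exact: sqr_ge0.
nra.
Qed.

Lemma dsum (g : nat -> R) N :
  \sum_(k < N) \sum_(j < N - k) g (k + j).+1 = \sum_(m < N.+1) m%:R * g m.
Proof.
elim: N => [|N IH]; first by rewrite big_ord0 big_ord_recl big_ord0 mul0r addr0.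
rewrite big_ord_recr /= subSnn big_ord1 addn0.
rewrite (eq_bigr (fun k : 'I_N => \sum_(j < N - k) g (k + j).+1 + g N.+1)); last first.
  move=> k _.
  have hk : (k <= N)%N := ltnW (ltn_ord k).
  rewrite (subSn hk) big_ord_recr /= subnKC //.
rewrite big_split /= IH sumr_const card_ord [in RHS]big_ord_recr /=.
by rewrite -addrA -mulrSr mulr_natl.
Qed.

Section Alg.
Variables (zeta : C) (b wn : nat -> C) (n : nat).
Hypothesis hw : forall k, (n < k)%N -> wn k = 0.

Definition dd m := (wn m.+1 - wn m) * b m.
Definition rr k := \sum_(j < n - k) dd (k + j).+1 * zeta ^+ j.+1.
Definition QQ k := wn k.+1 * b k + rr k.

Lemma QQlast k : (n <= k)%N -> QQ k = 0.
Proof.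
move=> nk; rewrite /QQ /rr hw ?ltnS // mul0r add0r.
by rewrite (_ : (n - k)%N = 0%N) ?big_ord0 //; apply/eqP; rewrite subn_eq0.
Qed.

Lemma rrec k : rr k - zeta * rr k.+1 = dd k.+1 * zeta.
Proof.
rewrite /rr; case: (ltnP k n) => kn.
  rewrite -(subnSK kn) big_ord_recl /= addn0 expr1 mulr_sumr.
  rewrite [X in _ + X - _](eq_bigr (fun i : 'I_(n - k.+1) =>
     zeta * (dd (k.+1 + i).+1 * zeta ^+ i.+1))); first by rewrite addrK.
  move=> i _; rewrite /bump leq0n add1n addnS addSn exprS; by rewrite mulrCA.
have e1 : (n - k = 0)%N by apply/eqP; rewrite subn_eq0.
have e2 : (n - k.+1 = 0)%N by apply/eqP; rewrite subn_eq0 (leq_trans kn).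
rewrite e1 e2 !big_ord0 mulr0 subrr /dd !hw ?mul0r ?subrr ?mul0r //.
by rewrite ltnS ltnW.
Qed.

Lemma DQ k : Dsh zeta QQ k.+1 = wn k.+1 * Dsh zeta b k.+1.
Proof.
have := rrec k; move/eqP; rewrite subr_eq => /eqP hr.
rewrite /Dsh /QQ hr /dd.
set r1 := rr k.+1; ring.
Qed.

Lemma pn_repr (a : nat -> C) z : (forall k, a k.+1 = Dsh zeta b k.+1) ->
  \sum_(k < n.+1) wn k * a k * z ^+ k =
  wn 0 * a 0 + zeta * QQ 0 + (z - zeta) * psum QQ z n.+1.
Proof.
move=> ha.
have e1 : psum (Dsh zeta QQ) z n.+1 = (z - zeta) * psum QQ z n.+1.
  rewrite psumD psumS (@QQlast n (leqnn n)) mul0r addr0; ring.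
have D0 : Dsh zeta QQ 0 = - zeta * QQ 0 by rewrite /Dsh sub0r mulNr.
have e2 : psum (Dsh zeta QQ) z n.+1 =
    - zeta * QQ 0 + \sum_(k < n) wn k.+1 * a k.+1 * z ^+ k.+1.
  rewrite /psum big_ord_recl /= expr0 mulr1 D0; congr (_ + _).
  by apply: eq_bigr => i _; rewrite /bump leq0n add1n DQ ha.
rewrite -e1 e2 big_ord_recl /= expr0 mulr1.
rewrite [X in _ + X = _](eq_bigr (fun i : 'I_n => wn i.+1 * a i.+1 * z ^+ i.+1)); last first.
  by move=> i _; rewrite /bump leq0n add1n.
by rewrite mulNr addrA addrK.
Qed.

Lemma psumQ_cst z j : psum QQ z (n.+1 + j) = psum QQ z n.+1.
Proof.
elim: j => [|j IH]; first by rewrite addn0.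
by rewrite addnS psumS IH QQlast ?mul0r ?addr0 // leqW // leq_addr.
Qed.

Lemma hh_cvg z s : psum b z N @[N --> \oo] --> s ->
  psum (fun k => b k - QQ k) z N @[N --> \oo] --> s - psum QQ z n.+1.
Proof.
move=> hs.
have -> : (fun N => psum (fun k => b k - QQ k) z N) =
    (fun N => psum b z N - psum QQ z N).
  by apply/funext => N; rewrite /psum -sumrB; apply: eq_bigr => i _; rewrite mulrBl.
have hq : psum QQ z N @[N --> \oo] --> psum QQ z n.+1.
  apply: cvg_near_cst; near=> N.
  have hN : (n.+1 <= N)%N by near: N; exact: nbhs_infty_ge.
  by rewrite -(subnKC hN) psumQ_cst.
exact: (cvgB hs hq).
Unshelve. all: by end_near.
Qed.

Section Est.
Variable L : R.
Hypothesis n1 : (1 <= n)%N.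
Hypothesis hwL : forall k, modc (wn k - wn k.+1) <= L / n%:R.
Hypothesis hz : modc zeta <= 1.

Lemma rr_bound k : modc (rr k) <= L / n%:R * \sum_(j < n - k) modc (b (k + j).+1).
Proof.
apply: le_trans (modc_sum _ _ _ _) _; rewrite mulr_sumr; apply: ler_sum => j _.
rewrite /dd !modcM modcX -modcN opprB.
have e1 := hwL (k + j).+1.
have e2 : modc zeta ^+ j.+1 <= 1 by rewrite exprn_ile1 // modc_ge0.
have e3 := modc_ge0 (b (k + j).+1).
have e4 := modc_ge0 zeta.
have e5 := modc_ge0 (wn (k + j).+1 - wn (k + j).+2).
have e6 : 0 <= modc zeta ^+ j.+1 by rewrite exprn_ge0.
set A := modc (wn _ - wn _) in e1 e5 *. set y := modc zeta ^+ j.+1 in e2 e6 *.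
set B := modc (b _) in e3 *. set l := L / n%:R in e1 *.
have : 0 <= A * B by rewrite mulr_ge0.
nra.
Qed.

Lemma rr_sq k : modc (rr k) ^+ 2 <=
  L ^+ 2 / n%:R * \sum_(j < n - k) modc (b (k + j).+1) ^+ 2.
Proof.
have n0 : (0 : R) < n%:R by rewrite ltr0n.
have h := rr_bound k.
have m0 := modc_ge0 (rr k).
have cs := cs_sum (fun j => modc (b (k + j).+1)) (n - k).
have Q0 : 0 <= \sum_(j < n - k) modc (b (k + j).+1) ^+ 2.
  by apply: sumr_ge0 => j _; exact: sqr_ge0.
have nk : ((n - k)%N%:R : R) <= n%:R by rewrite ler_nat leq_subr.
set S := \sum_(j < n - k) modc (b (k + j).+1) in h cs.
set Q := \sum_(j < n - k) _ in cs Q0 *.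
set m := (n - k)%N%:R in cs nk.
set N := n%:R in n0 nk *.
set l := L / N in h.
have -> : L ^+ 2 / N = l ^+ 2 * N by rewrite /l; field; rewrite gt_eqF.
have l2 : 0 <= l ^+ 2 by exact: sqr_ge0.
have : modc (rr k) ^+ 2 <= l ^+ 2 * S ^+ 2.
  rewrite -exprMn; have hlS : 0 <= l * S := le_trans m0 h.
  set x := modc (rr k) in m0 h *; set y := l * S in h hlS *; nra.
move=> h3; apply: le_trans h3 _.
rewrite -mulrA ler_wpM2l //; apply: le_trans cs _.
by rewrite ler_wpM2r.
Qed.

Lemma sum_rr_sq : \sum_(k < n) modc (rr k) ^+ 2 <=
  L ^+ 2 / n%:R * \sum_(m < n.+1) m%:R * modc (b m) ^+ 2.
Proof.
rewrite -(dsum (fun m => modc (b m) ^+ 2)) mulr_sumr.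
by apply: ler_sum => k _; exact: rr_sq.
Qed.

End Est.

End Alg.

Local Open Scope ereal_scope.

Lemma fin_eseries (f : nat -> R) N : (forall k, (N <= k)%N -> f k = 0%R) ->
  \sum_(0 <= k <oo) (f k)%:E = (\sum_(k < N) f k)%:E.
Proof.
move=> f0; apply: cvg_lim => //; apply: cvg_near_cst; near=> M.
have hM : (N <= M)%N by near: M; exact: nbhs_infty_ge.
rewrite sumEFin; congr EFin.
rewrite big_mkord (big_ord_widen M f hM) [RHS]big_mkcond /=.
apply: eq_bigr => i _; case: ifPn => //; rewrite -leqNgt => h.
by rewrite f0.
Unshelve. all: by end_near.
Qed.

Lemma ecvg0_le (u : nat -> \bar R) : u n @[n --> \oo] --> 0 ->
  forall e : R, (0 < e)%R -> \forall n \near \oo, u n <= e%:E.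
Proof.
move/fine_cvgP => [hfin hf] e e0.
move/cvgrPdist_le : hf => /(_ e e0) H.
near=> n.
have hn : u n \is a fin_num by near: n; exact: hfin.
have hle : (`|0 - fine (u n)| <= e)%R by near: n; exact: H.
move: hle; rewrite sub0r normrN => hle.
by rewrite -(fineK hn) lee_fin (le_trans (ler_norm _)).
Unshelve. all: by end_near.
Qed.

Lemma ecvg0_of (u : nat -> \bar R) : (forall n, 0 <= u n) ->
  (forall e : R, (0 < e)%R -> \forall n \near \oo, u n <= e%:E) ->
  u n @[n --> \oo] --> 0.
Proof.
move=> u0 H; apply/fine_cvgP; split.
  apply: filterS (H 1%R ltr01) => n hn.
  by rewrite ge0_fin_numE // (le_lt_trans hn) // ltry.
apply/cvgrPdist_le => e e0; apply: filterS (H e e0) => n hn.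
have hf : u n \is a fin_num by rewrite ge0_fin_numE // (le_lt_trans hn) // ltry.
rewrite sub0r normrN ger0_norm /=; last by rewrite fine_ge0.
by rewrite -lee_fin fineK.
Qed.


Lemma cvg_fsum (U : nat -> nat -> R) N : (forall k, U n k @[n --> \oo] --> 0%R) ->
  (\sum_(k < N) U n k)%R @[n --> \oo] --> 0%R.
Proof.
move=> hU; elim: N => [|N IH].
  by under eq_fun => n do rewrite big_ord0; exact: cvg_cst.
have -> : (fun n => \sum_(k < N.+1) U n k)%R = (fun n => \sum_(k < N) U n k + U n N)%R.
  by apply/funext => n; rewrite big_ord_recr.
rewrite -[X in _ --> X](addr0 0%R); exact: (cvgD IH (hU N)).
Qed.

Lemma dom_series (U : nat -> nat -> R) (g : nat -> R) :
  (forall n k, (0 <= U n k)%R) -> (forall n k, (1 <= n)%N -> (U n k <= g k)%R) ->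
  \sum_(0 <= k <oo) (g k)%:E < +oo -> (forall k, U n k @[n --> \oo] --> 0%R) ->
  \sum_(0 <= k <oo) (U n k)%:E @[n --> \oo] --> 0.
Proof.
move=> U0 Ug hg hU.
have g0 k : (0 <= g k)%R by apply: le_trans (U0 1%N k) (Ug _ _ _).
apply: ecvg0_of.
  by move=> n; apply: nneseries_ge0 => k _ _; rewrite lee_fin.
move=> e e0.
have e20 : (0 < e / 2)%R by rewrite divr_gt0.
have [N0 _ hN0] := ecvg0_le _ (@nneseries_tail_cvg _ (fun k => (g k)%:E) xpredT hg
   (fun k _ => g0 k : 0 <= (g k)%:E)) _ e20.
have := @cvg_fsum U N0 hU; move/cvgrPdist_le => /(_ _ e20) hF.
near=> n.
have n1 : (1 <= n)%N by near: n; exact: nbhs_infty_ge.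
have hFn : (`|0 - \sum_(k < N0) U n k| <= e / 2)%R by near: n; exact: hF.
rewrite (nneseries_split 0%N N0) //; last by move=> k _; rewrite lee_fin.
rewrite add0n (_ : e%:E = (e / 2)%:E + (e / 2)%:E); last by rewrite -EFinD -splitr.
apply: leeD.
  rewrite big_mkord sumEFin lee_fin; apply: le_trans (ler_norm _) _.
  by rewrite -normrN -sub0r.
apply: le_trans (hN0 N0 (leqnn _)).
apply: lee_nneseries; first by move=> k _ _; rewrite lee_fin.
by move=> k _; rewrite lee_fin; apply: Ug.
Unshelve. all: by end_near.
Qed.

Local Close Scope ereal_scope.

Lemma psum_add (f g : nat -> C) z N : psum (fun k => f k + g k) z N = psum f z N + psum g z N.
Proof. by rewrite /psum -big_split; apply: eq_bigr => i _; rewrite mulrDl. Qed.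

Lemma psum_sub (f g : nat -> C) z N : psum (fun k => f k - g k) z N = psum f z N - psum g z N.
Proof. by rewrite /psum -sumrB; apply: eq_bigr => i _; rewrite mulrBl. Qed.

Lemma psum_shift (b : nat -> C) z (s : C) :
  psum b z n @[n --> \oo] --> s -> psum b z n.+1 @[n --> \oo] --> s.
Proof. move=> hs. by rewrite (cvg_shiftS (fun n => psum b z n)). Qed.

Lemma shift_back (u : nat -> C) (s : C) :
  u n.+1 @[n --> \oo] --> s -> u n @[n --> \oo] --> s.
Proof. move=> hs. by rewrite -(cvg_shiftS u). Qed.

Lemma coef_id (a b : nat -> C) (zeta c : C) :
  (forall z : C, modc z < 1 -> cvgn (psum a z)) ->
  (forall z : C, modc z < 1 -> exists s, psum b z n @[n --> \oo] --> s /\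
      pser a z = c + (z - zeta) * s) ->
  forall k, a k.+1 = Dsh zeta b k.+1.
Proof.
move=> ha hb.
pose e := fun k => Dsh zeta b k + (if k is 0 then c else 0).
have He z : modc z < 1 -> psum (fun k => a k - e k) z n @[n --> \oo] --> 0.
  move=> zl; have [s [hs hf]] := hb z zl.
  have ea : psum a z n @[n --> \oo] --> pser a z := ha z zl.
  have ee : psum e z n @[n --> \oo] --> pser a z.
    apply: shift_back.
    have -> : (fun n => psum e z n.+1) =
        (fun n => c + (z * psum b z n - zeta * psum b z n.+1)).
      apply/funext => N; rewrite /e psum_add psumD addrC; congr (_ + _).
      rewrite /psum big_ord_recl big1 => [|i _]; last by rewrite mul0r.
      by rewrite /= expr0 mulr1 addr0.
    have hs1 := @psum_shift b z s hs.
    have h1 : z * psum b z n @[n --> \oo] --> z * s by apply: (cvgM (cvg_cst z) hs).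
    have h2 : zeta * psum b z n.+1 @[n --> \oo] --> zeta * s.
      by apply: (cvgM (cvg_cst zeta) hs1).
    have -> : pser a z = c + (z * s - zeta * s) by rewrite hf mulrBl.
    exact: (cvgD (cvg_cst c) (cvgB h1 h2)).
  have -> : (fun n => psum (fun k => a k - e k) z n) = (fun n => psum a z n - psum e z n).
    by apply/funext => n; rewrite psum_sub.
  rewrite -(subrr (pser a z)); exact: (cvgB ea ee).
move=> k; have := pser_uniq _ He k.+1.
by move/eqP; rewrite subr_eq0 /e addr0 => /eqP.
Qed.

Lemma cvg_invn : (n%:R^-1 : R) @[n --> \oo] --> 0.
Proof.
rewrite -cvg_shiftS /=.
have -> : (fun n : nat => (n.+1%:R^-1 : R)) = harmonic by [].
exact: cvg_harmonic.
Qed.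

Section Main.
Variables (w : nat -> nat -> C) (L M : R).
Hypothesis hw0 : forall n k : nat, (n < k)%N -> w n k = 0.
Hypothesis hwlim : forall k : nat, w n k @[n --> \oo] --> (1 : C).
Hypothesis hwM : forall n k : nat, modc (w n k) <= M.
Hypothesis hwL : forall n k : nat, (1 <= n)%N -> modc (w n k - w n k.+1) <= L / n%:R.

Definition UU (b : nat -> C) n k : R :=
  2 * (modc (1 - w n k.+1) ^+ 2 * modc (b k) ^+ 2) +
  (if (k <= n)%N then 2 * (L ^+ 2 / n%:R * (k%:R * modc (b k) ^+ 2)) else 0).

Definition Kc := 2 * (1 + M) ^+ 2 + 2 * L ^+ 2.

Lemma M0 : 0 <= M.
Proof. exact: le_trans (modc_ge0 _) (hwM 0 0). Qed.

Lemma Kc_ge0 : 0 <= Kc.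
Proof. by rewrite /Kc addr_ge0 // mulr_ge0 // sqr_ge0. Qed.

Lemma UU_ge0 b n k : 0 <= UU b n k.
Proof.
rewrite /UU addr_ge0 //; first by rewrite mulr_ge0 // mulr_ge0 // sqr_ge0.
case: ifP => // _; rewrite mulr_ge0 // mulr_ge0 //; last by rewrite mulr_ge0 // sqr_ge0.
by rewrite divr_ge0 // sqr_ge0.
Qed.

Lemma UU_le b n k : (1 <= n)%N -> UU b n k <= Kc * modc (b k) ^+ 2.
Proof.
move=> n1.
have hM := M0.
have h1 : modc (1 - w n k.+1) <= 1 + M.
  by apply: le_trans (modcB _ _) _; rewrite modc1 lerD2l.
have h1' : modc (1 - w n k.+1) ^+ 2 <= (1 + M) ^+ 2.
  have := modc_ge0 (1 - w n k.+1); set x := modc _ in h1 *; move=> x0; nra.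
have hb := sqr_ge0 (modc (b k)).
have hL := sqr_ge0 L.
set B := modc (b k) ^+ 2 in hb *.
have h2 : (if (k <= n)%N then 2 * (L ^+ 2 / n%:R * (k%:R * B)) else 0) <= 2 * L ^+ 2 * B.
  case: ifP => kn; last by rewrite mulr_ge0 // mulr_ge0.
  have n0 : (0 : R) < n%:R by rewrite ltr0n.
  have kn' : (k%:R : R) <= n%:R by rewrite ler_nat.
  have -> : L ^+ 2 / n%:R * (k%:R * B) = L ^+ 2 * B * (k%:R / n%:R).
    set i := (n%:R)^-1; set kk := (k%:R : R); rewrite /= ?/i; ring.
  have : k%:R / n%:R <= (1 : R) by rewrite ler_pdivrMr // mul1r.
  have : 0 <= L ^+ 2 * B by rewrite mulr_ge0.
  rewrite -(mulrA 2); set q := k%:R / n%:R; set P := L ^+ 2 * B. move=> *. nra.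
rewrite /UU /Kc -/B. set X := if _ then _ else _ in h2 *.
set A := modc (1 - w n k.+1) ^+ 2 in h1' *.
have hAB : A * B <= (1 + M) ^+ 2 * B := ler_wpM2r hb h1'.
set MM := (1 + M) ^+ 2 in hAB *. set LL := L ^+ 2 in h2 *. nra.
Qed.

Lemma modc_cvg0 (u : nat -> C) : u n @[n --> \oo] --> 0 -> modc (u n) @[n --> \oo] --> 0.
Proof.
move=> hu; apply/cvgrPdist_le => e e0.
have e0' : (0 : C) < (e%:C)%C by rewrite ltcR.
move/cvgrPdist_le : hu => /(_ _ e0') hu.
apply: filterS hu => n.
rewrite !sub0r !normrN -modc_le => h.
by rewrite ger0_norm // modc_ge0.
Qed.

Lemma UU_cvg b k : UU b n k @[n --> \oo] --> 0.
Proof.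
have h1 : modc (1 - w n k.+1) @[n --> \oo] --> 0.
  apply: modc_cvg0.
  have h : (1 - w n k.+1) @[n --> \oo] --> (1 - 1 : C).
    by apply: (cvgB (cvg_cst (1 : C)) (hwlim k.+1)).
  by rewrite subrr in h.
set B := modc (b k) ^+ 2.
have h2 : modc (1 - w n k.+1) ^+ 2 @[n --> \oo] --> 0.
  have -> : (fun n => modc (1 - w n k.+1) ^+ 2) =
      (fun n => modc (1 - w n k.+1) * modc (1 - w n k.+1)).
    by apply/funext => n; rewrite expr2.
  have h : modc (1 - w n k.+1) * modc (1 - w n k.+1) @[n --> \oo] --> (0 * 0 : R).
    by apply: (cvgM h1 h1).
  by rewrite mulr0 in h.
have hA : 2 * (modc (1 - w n k.+1) ^+ 2 * B) @[n --> \oo] --> 0.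
  have h : 2 * (modc (1 - w n k.+1) ^+ 2 * B) @[n --> \oo] --> 2 * (0 * B).
    by apply: (cvgM (cvg_cst (2 : R)) (cvgM h2 (cvg_cst B))).
  by rewrite mul0r mulr0 in h.
have h3 : L ^+ 2 / n%:R @[n --> \oo] --> 0.
  have h : L ^+ 2 / n%:R @[n --> \oo] --> L ^+ 2 * 0.
    by apply: (cvgM (cvg_cst _) cvg_invn).
  by rewrite mulr0 in h.
have hG : 2 * (L ^+ 2 / n%:R * (k%:R * B)) @[n --> \oo] --> 0.
  have h : 2 * (L ^+ 2 / n%:R * (k%:R * B)) @[n --> \oo] --> 2 * (0 * (k%:R * B)).
    by apply: (cvgM (cvg_cst (2 : R)) (cvgM h3 (cvg_cst _))).
  by rewrite mul0r mulr0 in h.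
have hG' : (if (k <= n)%N then 2 * (L ^+ 2 / n%:R * (k%:R * B)) else 0)
    @[n --> \oo] --> 0.
  apply: cvg_trans hG; apply: near_eq_cvg; near=> n.
  have hk : (k <= n)%N by near: n; exact: nbhs_infty_ge.
  by rewrite hk.
have h : UU b n k @[n --> \oo] --> (0 + 0 : R) by apply: (cvgD hA hG').
by rewrite addr0 in h.
Unshelve. all: by end_near.
Qed.

Lemma main_est (a b : nat -> C) zeta n :
  (1 <= n)%N -> modc zeta <= 1 ->
  (forall z : C, modc z < 1 -> cvgn (psum a z)) ->
  Drep zeta (pser a) b ->
  (Dzeta zeta (fun z => (pser a z - pn w a n z)%R) <=
    \sum_(0 <= k <oo) (UU b n k)%:E)%E.
Proof.
move=> n1 hz ha [hb [c hrep]].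
have hab := @coef_id a b zeta c ha hrep.
have hw : forall k, (n < k)%N -> w n k = 0 := hw0 n.
have hwLn : forall k, modc (w n k - w n k.+1) <= L / n%:R := fun k => hwL n k n1.
pose Q := QQ zeta b (w n) n.
pose h := fun k => b k - Q k.
pose A k := 2 * (modc (1 - w n k.+1) ^+ 2 * modc (b k) ^+ 2).
pose G k := if (k <= n)%N then 2 * (L ^+ 2 / n%:R * (k%:R * modc (b k) ^+ 2)) else 0.
pose rho k := 2 * modc (rr zeta b (w n) n k) ^+ 2.
have A0 k : 0 <= A k by rewrite /A mulr_ge0 // mulr_ge0 // sqr_ge0.
have rho0 k : 0 <= rho k by rewrite /rho mulr_ge0 // sqr_ge0.
have G0 k : 0 <= G k.
  rewrite /G; case: ifP => // _; rewrite mulr_ge0 // mulr_ge0 //.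
    by rewrite divr_ge0 // sqr_ge0.
  by rewrite mulr_ge0 // sqr_ge0.
have hterm k : modc (h k) ^+ 2 <= A k + rho k.
  have -> : h k = (1 - w n k.+1) * b k - rr zeta b (w n) n k.
    rewrite /h /Q /QQ; set r := rr _ _ _ _ k; set x := w n k.+1; set y := b k; ring.
  have := modcB ((1 - w n k.+1) * b k) (rr zeta b (w n) n k).
  rewrite modcM /A /rho.
  have := modc_ge0 ((1 - w n k.+1) * b k - rr zeta b (w n) n k).
  have := modc_ge0 (1 - w n k.+1). have := modc_ge0 (b k).
  have := modc_ge0 (rr zeta b (w n) n k).
  set m := modc (_ - rr _ _ _ _ k). set x := modc (1 - w n k.+1). set y := modc (b k).
  set r := modc (rr _ _ _ _ k).
  move=> r0 y0 x0 m0 hm.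
  have xy0 : 0 <= x * y by rewrite mulr_ge0.
  rewrite -exprMn; set p := x * y in xy0 hm *.
  have h1 := sqr_ge0 (p - r).
  have h2 : 0 <= (p + r - m) * (p + r + m) by apply: mulr_ge0; rewrite ?subr_ge0 // !addr_ge0.
  nra.
have hrho : (\sum_(0 <= k <oo) (rho k)%:E <= \sum_(0 <= k <oo) (G k)%:E)%E.
  rewrite (@fin_eseries rho n); last first.
    move=> k nk; rewrite /rho /rr.
    by rewrite (_ : (n - k)%N = 0%N) ?big_ord0 ?modc0 ?expr0n ?mulr0 //; apply/eqP; rewrite subn_eq0.
  rewrite (@fin_eseries G n.+1); last first.
    by move=> k nk; rewrite /G ifN // -ltnNge.
  rewrite lee_fin /rho -mulr_sumr.
  apply: le_trans (ler_wpM2l _ (@sum_rr_sq zeta b (w n) n L n1 hwLn hz)) _ => //.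
  rewrite mulr_sumr mulr_sumr; apply: ler_sum => i _.
  rewrite /G (ltnSE (ltn_ord i)) mulrA.
  by rewrite -mulrA.
have hsum : (H2norm2 h <= \sum_(0 <= k <oo) (UU b n k)%:E)%E.
  rewrite /H2norm2.
  apply: (@le_trans _ _ (\sum_(0 <= k <oo) ((A k)%:E + (rho k)%:E))%E).
    apply: lee_nneseries; first by move=> k _ _; rewrite lee_fin sqr_ge0.
    by move=> k _; rewrite -EFinD lee_fin.
  rewrite nneseriesD; last 2 first.
    by move=> k _ _; rewrite lee_fin.
    by move=> k _ _; rewrite lee_fin.
  apply: (@le_trans _ _ (\sum_(0 <= k <oo) (A k)%:E + \sum_(0 <= k <oo) (G k)%:E)%E).
    by rewrite leeD2l.
  rewrite -nneseriesD; last 2 first.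
    by move=> k _ _; rewrite lee_fin.
    by move=> k _ _; rewrite lee_fin.
  by apply: lee_nneseries => [k _ _|k _]; rewrite ?EFinD ?lee_fin /UU ?lexx // addr_ge0.
have hUfin : (\sum_(0 <= k <oo) (UU b n k)%:E < +oo)%E.
  apply: (@le_lt_trans _ _ (\sum_(0 <= k <oo) (Kc%:E * (modc (b k) ^+ 2)%:E))%E).
    apply: lee_nneseries; first by move=> k _ _; rewrite lee_fin UU_ge0.
    by move=> k _; rewrite -EFinM lee_fin UU_le.
  rewrite nneseriesZl; last by move=> k _; rewrite lee_fin sqr_ge0.
  by apply: lte_mul_pinfty => //; rewrite lee_fin Kc_ge0.
have hfin := le_lt_trans hsum hUfin.
apply: le_trans hsum; apply: ereal_inf_lbound; exists h => //; split; first exact: hfin.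
exists (c - (w n 0 * a 0 + zeta * Q 0)) => z zl.
have [s [hs hf]] := hrep z zl.
exists (s - psum Q z n.+1); split; first exact: (@hh_cvg zeta b (w n) n hw z s hs).
rewrite /pn (@pn_repr zeta b (w n) n hw a z hab) hf -/Q.
set P := psum Q z n.+1. set X := w n 0 * a 0 + zeta * Q 0.
ring.
Qed.

Lemma Kc_gt0 : 0 < Kc.
Proof.
have hM := M0; rewrite /Kc; have := sqr_ge0 L; set l := L ^+ 2.
have : 1 <= (1 + M) ^+ 2 by rewrite expr2; nra.
set m := (1 + M) ^+ 2 => *. lra.
Qed.

Lemma UU_sum_le (b : nat -> C) n : (1 <= n)%N ->
  (\sum_(0 <= k <oo) (UU b n k)%:E <= Kc%:E * H2norm2 b)%E.
Proof.
move=> n1.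
apply: (@le_trans _ _ (\sum_(0 <= k <oo) (Kc%:E * (modc (b k) ^+ 2)%:E))%E).
  apply: lee_nneseries; first by move=> k _ _; rewrite lee_fin UU_ge0.
  by move=> k _; rewrite -EFinM lee_fin UU_le.
by rewrite nneseriesZl //; move=> k _; rewrite lee_fin sqr_ge0.
Qed.

Lemma final_part (a : nat -> C) zeta :
  (forall z : C, modc z < 1 -> cvgn (psum a z)) ->
  modc zeta <= 1 ->
  (Dzeta zeta (pser a) < +oo)%E ->
  (Dzeta zeta (fun z => (pser a z - pn w a n z)%R) @[n --> \oo] --> 0%E)
  /\ (ereal_sup [set Dzeta zeta (fun z => (pser a z - pn w a n z)%R)
                  | n in [set n : nat | (1 <= n)%N]]
      <= Kc%:E * Dzeta zeta (pser a))%E.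
Proof.
move=> ha hz hD.
have [b hb] : exists b, Drep zeta (pser a) b.
  apply: contrapT => hnb; move: hD; rewrite /Dzeta.
  have -> : [set H2norm2 b | b in [set b | Drep zeta (pser a) b]] = set0.
    apply/seteqP; split => x //=; case=> b' hb' _; exfalso; apply: hnb; by exists b'.
  by rewrite ereal_inf0.
split.
  have hg : (\sum_(0 <= k <oo) (Kc * modc (b k) ^+ 2)%:E < +oo)%E.
    under eq_eseriesr do rewrite EFinM.
    rewrite nneseriesZl; last by move=> k _; rewrite lee_fin sqr_ge0.
    by apply: lte_mul_pinfty; rewrite ?lee_fin ?Kc_ge0 //; case: hb.
  have hdom := @dom_series (UU b) (fun k => Kc * modc (b k) ^+ 2)
    (@UU_ge0 b) (@UU_le b) hg (@UU_cvg b).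
  apply: (squeeze_cvge _ (cvg_cst 0%E) hdom).
  near=> n.
  have n1 : (1 <= n)%N by near: n; exact: nbhs_infty_ge.
  apply/andP; split; last exact: main_est.
  apply: le_ereal_inf_tmp => y [b' [hb' _] <-].
  by apply: nneseries_ge0 => k _ _; rewrite lee_fin sqr_ge0.
apply: ge_ereal_sup => y [n n1 <-].
rewrite /Dzeta -ereal_inf_pZl; last exact: Kc_gt0.
apply: le_ereal_inf_tmp => y' [x [b' hb' <-] <-].
apply: le_trans (@main_est a b' zeta n n1 hz ha hb') _.
exact: UU_sum_le.
Unshelve. all: by end_near.
Qed.

End Main.

End Modc.

Theorem mainTheorem8 (R : realType) (w : nat -> nat -> Cx R) (L M : R) :
  (forall n k : nat, (n < k)%N -> w n k = 0) ->
  (forall k : nat, w n k @[n --> \oo] --> (1 : Cx R)) ->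
  (forall n k : nat, modc (w n k) <= M) ->
  (forall n k : nat, (1 <= n)%N ->
     modc (w n k - w n k.+1) <= L / n%:R) ->
  exists C : R, forall (a : nat -> Cx R) (zeta : Cx R),
    (forall z : Cx R, modc z < 1 -> cvgn (psum a z)) ->
    modc zeta <= 1 ->
    (Dzeta zeta (pser a) < +oo)%E ->
    (Dzeta zeta (fun z => (pser a z - pn w a n z)%R) @[n --> \oo] --> 0%E)
    /\ (ereal_sup [set Dzeta zeta (fun z => (pser a z - pn w a n z)%R)
                    | n in [set n : nat | (1 <= n)%N]]
        <= (C ^+ 2)%:E * Dzeta zeta (pser a))%E.

Proof.
move=> hw0 hwlim hwM hwL.
exists (Num.sqrt (Kc R L M)) => a zeta ha hz hD.
rewrite sqr_sqrtr; last exact: Kc_ge0.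
exact: (@final_part R w L M hw0 hwlim hwM hwL a zeta ha hz hD).
Qed.
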